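(* Let $G$ be a graph with $n$ vertices. If $G$ admits a $B_k$-EPG representation, then it admits a $B_k$-EPG representation on a grid of size at most $4n(k+1)\times 4n(k+1)$; and if $G$ admits a Helly $B_k$-EPG representation, then it admits a Helly $B_k$-EPG representation on a grid of size at most $4n(k+1)\times 4n(k+1)$.
   Context: A grid is the set of integer points of the plane; a grid edge joins two grid points at distance $1$. A path in the grid is a sequence of distinct grid edges in which consecutive edges share exactly one grid point and non-consecutive edges share none; a bend is a pair of consecutive edges with different directions (horizontal/vertical). An EPG representation of $G$ is a family $(P_v)_{v\in V(G)}$ of grid paths such that distinct $u,v$ are adjacent iff $P_u,P_v$ share a grid edge; it is $B_k$-EPG if every path has at most $k$ bends, and Helly if every subfamily of pairwise edge-intersecting paths has a grid edge common to all its members. A grid of size $a\times b$ consists of $a$ columns and $b$ rows of grid points. *)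

(* Defs.v *)
From HB Require Import structures.
From mathcomp Require Import all_boot all_order all_algebra.
Set Implicit Arguments. Unset Strict Implicit. Unset Printing Implicit Defensive.
Import Order.TTheory GRing.Theory Num.Theory.

Definition point := (int * int)%type.

Definition gadj (p q : point) : bool :=
  (absz (p.1 - q.1)%R + absz (p.2 - q.2)%R == 1)%N.

(* A grid path is given by its sequence of grid points p_0, ..., p_m (m >= 1):
   consecutive points at distance 1 and all points distinct.  Its edges are
   {p_i, p_(i+1)}.  This is exactly a sequence of distinct grid edges where
   consecutive edges share exactly one point and non-consecutive ones none. *)
Definition is_gpath (s : seq point) : bool :=
  [&& (1 < size s)%N, uniq s & all (fun e => gadj e.1 e.2) (zip s (behead s))].

Definition has_edge (s : seq point) (p q : point) : bool :=
  ((p, q) \in zip s (behead s)) || ((q, p) \in zip s (behead s)).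

Definition horiz (p q : point) : bool := p.2 == q.2.

Fixpoint bends (s : seq point) : nat :=
  match s with
  | a :: ((b :: c :: _) as t) => (horiz a b != horiz b c) + bends t
  | _ => 0
  end.

Definition share_edge (s t : seq point) : Prop :=
  exists p q : point, gadj p q /\ has_edge s p q /\ has_edge t p q.

Definition BkEPG (V : finType) (E : rel V) (k : nat) (P : V -> seq point) : Prop :=
  (forall v, is_gpath (P v) /\ (bends (P v) <= k)%N) /\
  (forall u v, u != v -> (E u v <-> share_edge (P u) (P v))).

Definition helly (V : finType) (P : V -> seq point) : Prop :=
  forall S : {set V},
    (forall u v, u \in S -> v \in S -> share_edge (P u) (P v)) ->
    exists p q : point, gadj p q /\ forall u, u \in S -> has_edge (P u) p q.

Definition on_grid (a b : nat) (s : seq point) : bool :=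
  all (fun p : point => [&& (0 <= p.1)%R, (p.1 < a%:Z)%R, (0 <= p.2)%R & (p.2 < b%:Z)%R]) s.

(* Main.v *)
Require Import Defs.
From mathcomp Require Import all_boot all_order all_algebra.
From mathcomp Require Import zify.
Import Order.TTheory GRing.Theory Num.Theory.
Set Implicit Arguments. Unset Strict Implicit. Unset Printing Implicit Defensive.
Local Open Scope ring_scope.

Fixpoint adjs (s : seq point) : bool :=
  match s with a :: t => match t with b :: _ => gadj a b && adjs t | [::] => true end
  | [::] => true end.

Lemma adjsE s : all (fun e => gadj e.1 e.2) (zip s (behead s)) = adjs s.
Proof. elim: s => [|a s IH] //=; case: s IH => [|b t] //= ->. by []. Qed.

Lemma has_edge_nil p q : has_edge [::] p q = false. Proof. by []. Qed.
Lemma has_edge_1 a p q : has_edge [:: a] p q = false. Proof. by []. Qed.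
Lemma has_edge_cons2 a b t p q :
  has_edge [:: a, b & t] p q = [|| (p, q) == (a, b), (q, p) == (a, b) | has_edge (b :: t) p q].
Proof.
rewrite /has_edge /= !in_cons.
by case: eqP; case: eqP => //=; rewrite ?orbT ?orbF //= orbC.
Qed.

Lemma has_edge_sym s p q : has_edge s p q = has_edge s q p.
Proof. by rewrite /has_edge orbC. Qed.

Lemma gadj_sym p q : gadj p q = gadj q p.
Proof. rewrite /gadj; apply/eqP/eqP; lia. Qed.

Lemma has_edge_gadj s p q : adjs s -> has_edge s p q -> gadj p q.
Proof.
elim: s => [|a s IH] //; case: s IH => [|b t] IH //.
rewrite has_edge_cons2 /= => /andP[ab adt] /or3P[/eqP[-> ->]|/eqP[-> ->]|].
- by [].
- by rewrite gadj_sym.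
- by apply: IH.
Qed.

Lemma has_edge_consr a s p q : has_edge s p q -> has_edge (a :: s) p q.
Proof. case: s => [|b t] //; by rewrite has_edge_cons2 => ->; rewrite !orbT. Qed.

Lemma gadj_vert a b : gadj a b -> (a.1 == b.1) = ~~ (a.2 == b.2).
Proof. rewrite /gadj => /eqP H; apply/eqP/negP; case: (eqVneq a.2 b.2); lia. Qed.


Section Del.
Variable x : int.

Definition G (p : point) : point := if x < p.1 then (p.1 - 1, p.2) else p.
Definition L (p : point) : point := if x <= p.1 then (p.1 + 1, p.2) else p.

Fixpoint del (s : seq point) : seq point :=
  match s with a :: t => if a.1 == x then del t else G a :: del t | [::] => [::] end.

Definition win (a b c : point) : bool :=
  [&& a.2 == b.2, c.2 == b.2 &
   ((a.1 == x - 1) && (c.1 == x + 1)) || ((a.1 == x + 1) && (c.1 == x - 1))].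

Fixpoint okr (s : seq point) : bool :=
  match s with
  | a :: t => match t with
     | b :: t' => match t' with
        | c :: _ => ((b.1 == x) ==> win a b c) && okr t
        | [::] => b.1 != x end
     | [::] => true end
  | [::] => true end.

Definition phi (p q : point) : point * point :=
  if p.1 == x then ((x - 1, p.2), (x, p.2))
  else if q.1 == x then ((x - 1, q.2), (x, q.2)) else (G p, G q).

Definition psi (p q : point) : point * point :=
  if (p.2 == q.2) && (((p.1 == x - 1) && (q.1 == x)) || ((p.1 == x) && (q.1 == x - 1)))
  then ((x, p.2), (x + 1, p.2)) else (L p, L q).

Lemma G2 p : (G p).2 = p.2. Proof. by rewrite /G; case: ifP. Qed.
Lemma horizG p q : horiz (G p) (G q) = horiz p q. Proof. by rewrite /horiz !G2. Qed.

Lemma gadjG p q : p.1 != x -> q.1 != x -> gadj p q -> gadj (G p) (G q).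
Proof.
case: p => p1 p2; case: q => q1 q2; rewrite /gadj /G /=.
move=> /eqP h1 /eqP h2 /eqP h.
case: ifP => /= H1; case: ifP => /= H2; apply/eqP; lia.
Qed.

Lemma LG p : p.1 != x -> L (G p) = p.
Proof.
case: p => p1 p2 /= /eqP h; rewrite /G /=.
case: ifP => H1; rewrite /L /=; case: ifP => H2 //; first (by congr pair; lia); lia.
Qed.

Lemma G_inj p q : p.1 != x -> q.1 != x -> G p = G q -> p = q.
Proof. by move=> hp hq e; rewrite -(LG hp) -(LG hq) e. Qed.

Lemma delE s : del s = map G (filter (fun p => p.1 != x) s).
Proof. elim: s => [|a s IH] //=; case: eqP => //= _; by rewrite IH. Qed.

Lemma del_uniq s : uniq s -> uniq (del s).
Proof.
move=> u; rewrite delE map_inj_in_uniq ?filter_uniq //.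
move=> p q; rewrite !mem_filter => /andP[hp _] /andP[hq _]; exact: G_inj.
Qed.

Lemma okr_tail a s : okr (a :: s) -> okr s.
Proof. by case: s => [|b [|c t]] //= /andP[]. Qed.

Lemma okr_last a s : s != [::] -> okr (a :: s) -> (last a s).1 != x.
Proof.
elim: s a => [|b s IH] a // _; case: s IH => [|c t] IH //= /andP[_ h].
exact: (IH b).
Qed.

Lemma del_nil s : del s = [::] -> all (fun p => p.1 == x) s.
Proof. elim: s => [|a s IH] //=; case: eqP => //= _ /IH ->. Qed.

Lemma del_nonnil a s : s != [::] -> okr (a :: s) -> del s != [::].
Proof.
move=> ns ok; apply/negP => /eqP /del_nil /allP H.
have := okr_last ns ok; rewrite H //.
by case: s ns {ok H} => // b t _; rewrite /= mem_last.
Qed.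

Lemma HD b c s : b.1 != x -> okr [:: b, c & s] ->
  exists z rest, del (c :: s) = z :: rest /\ horiz (G b) z = horiz b c.
Proof.
move=> hb; case: s => [|d s].
- rewrite /= => hc; rewrite (negPf hc); exists (G c), [::]; by rewrite horizG.
rewrite [okr _]/= => /andP[hw ok].
case: (eqVneq c.1 x) => hc.
- move: hw; rewrite hc eqxx /= => /and3P[h1 h2 h4].
  move: ok; rewrite /= => ok.
  have hd : d.1 != x.
    case/orP: h4 => /andP[_ /eqP ->]; apply/eqP; lia.
  rewrite hc eqxx (negPf hd); exists (G d), (del s); split => //.
  by rewrite horizG /horiz (eqP h2) (eqP h1) eqxx.
- by rewrite /= (negPf hc); exists (G c), (del (d :: s)); rewrite horizG.
Qed.

Lemma step_x a b s : okr [:: a, b & s] -> b.1 == x ->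
  exists c s', [/\ s = c :: s', win a b c, c.1 != x & okr (c :: s')].
Proof.
case: s => [|c s]; first by rewrite /= => /negPf ->.
move=> ok hb; have ok' := okr_tail (okr_tail ok).
move: ok; rewrite [okr _]/= => /andP[hw _]; move: hw; rewrite hb /= => hw.
exists c, s; split => //.
case/and3P: hw => _ _ /orP[] /andP[_ /eqP ->]; apply/eqP; lia.
Qed.

Lemma win_gadj a b c : win a b c -> gadj (G a) (G c).
Proof.
case: a => a1 a2; case: b => b1 b2; case: c => c1 c2.
rewrite /win /gadj /G /= => /and3P[/eqP h1 /eqP h2 /orP[]] /andP[/eqP h3 /eqP h4];
  case: ifP => H1; case: ifP => H2 /=; apply/eqP; lia.
Qed.

Lemma del_adjs n s a : (size s < n)%N -> a.1 != x -> okr (a :: s) -> adjs (a :: s) ->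
  adjs (G a :: del s).
Proof.
elim: n s a => [|n IH] [|b s] a // hs ha ok ad.
case: (boolP (b.1 == x)) => hb.
- have [c [s' [es hw hc ok']]] := step_x ok hb; subst s.
  move: ad => /= /andP[_ /andP[_ ad]]; rewrite hb (negPf hc) /=.
  rewrite (win_gadj hw) /=; apply: (IH s' c) => //; move: hs => /=; lia.
- move: ad => /= /andP[ab ad]; rewrite (negPf hb) /= gadjG //=; apply: (IH s b) => //.
  exact: okr_tail ok.
Qed.

Lemma del_cons a t : del (a :: t) = if a.1 == x then del t else G a :: del t.
Proof. by []. Qed.

Lemma bends_cons u v w : bends [:: u, v & w] =
  ((if w is z :: _ then horiz u v != horiz v z else false) + bends (v :: w))%N.
Proof. by case: w. Qed.

Lemma win_horiz a b c : win a b c -> [/\ horiz a b, horiz b c & horiz a c].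
Proof. by case/and3P => /eqP h1 /eqP h2 _; rewrite /horiz h1 h2 eqxx. Qed.

Lemma del_bends n s a : (size s < n)%N -> a.1 != x -> okr (a :: s) -> adjs (a :: s) ->
  bends (G a :: del s) = bends (a :: s).
Proof.
elim: n s a => [|n IH] [|b s] a // hs ha ok ad.
case: (boolP (b.1 == x)) => hb.
- have [c [s' [es hw hc ok']]] := step_x ok hb; subst s.
  have {}ad : adjs (c :: s') by move: ad => /= /andP[_ /andP[_ ->]].
  rewrite !del_cons hb (negPf hc).
  rewrite bends_cons (IH s' c) //; last by move: hs => /=; lia.
  rewrite [bends [:: a, b, c & s']]bends_cons [bends (b :: _)]bends_cons.
  have [h1 h2 h3] := win_horiz hw; rewrite h1 h2 /= add0n.
  congr addn; case: s' {hs ad IH ok} ok' => [|d s''] ok' //.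
  have [z [rest [-> hz]]] := HD hc ok'.
  by rewrite hz horizG h3.
- have {}ad : adjs (b :: s) by move: ad => /= /andP[_ ->].
  rewrite del_cons (negPf hb).
  rewrite bends_cons (IH s b) //; last exact: okr_tail ok.
  rewrite [bends [:: a, b & s]]bends_cons; congr addn.
  case: s {hs ad IH} ok => [|c s''] ok //.
  have [z [rest [-> hz]]] := HD hb (okr_tail ok).
  by rewrite hz horizG.
Qed.

Lemma win_G a b c : win a b c -> b.1 == x ->
  (G a, G c) = ((x - 1, b.2), (x, b.2)) \/ (G c, G a) = ((x - 1, b.2), (x, b.2)).
Proof.
case: a => a1 a2; case: b => b1 b2; case: c => c1 c2.
rewrite /win /G /= => /and3P[/eqP h1 /eqP h2 /orP[]] /andP[/eqP h3 /eqP h4] /eqP h5;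
  subst; [left|right]; rewrite ?ltxx;
  (case: ifP => H1; [|lia]) || (case: ifP => H1; [lia|]);
  (case: ifP => H2; [|lia]) || (case: ifP => H2; [lia|]); congr (_, _); congr pair; lia.
Qed.

Lemma psi_win a b c : win a b c -> b.1 == x ->
  psi (G a) (G c) = ((x, b.2), (x + 1, b.2)) /\ psi (G c) (G a) = ((x, b.2), (x + 1, b.2)).
Proof.
move=> hw hb; have [e|e] := win_G hw hb; case: e => -> -> ;
  rewrite /psi /= eqxx /= ?eqxx ?orbT /=; split => //;
  (have -> : (x == x - 1) = false by apply/eqP; lia); rewrite /= ?andbF ?eqxx //.
Qed.

Lemma edge_win a b c t : win a b c -> b.1 == x ->
  has_edge [:: a, b, c & t] (x, b.2) (x + 1, b.2).
Proof.
case: a => a1 a2; case: b => b1 b2; case: c => c1 c2.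
rewrite /win /= => /and3P[/eqP h1 /eqP h2 /orP[]] /andP[/eqP h3 /eqP h4] /eqP h5;
  subst; rewrite !has_edge_cons2 !eqxx !orbT //.
Qed.

Lemma psi_G a b : a.1 != x -> b.1 != x -> gadj a b -> psi (G a) (G b) = (a, b).
Proof.
move=> ha hb ab; rewrite /psi.
case: ifP => [|_]; last by rewrite !LG.
case: a ha ab => a1 a2; case: b hb => b1 b2; rewrite /gadj /G /= => /eqP hb /eqP ha /eqP ab.
case: ifP => H1; case: ifP => H2 /= /andP[_ /orP[] /andP[/eqP e1 /eqP e2]]; lia.
Qed.

Lemma gadj_xm1 y : gadj (x - 1, y) (x, y).
Proof. rewrite /gadj; apply/eqP => /=; lia. Qed.

Lemma gadj_phi p q : gadj p q -> gadj (phi p q).1 (phi p q).2.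
Proof.
rewrite /phi; case: ifP => hp; first by rewrite gadj_xm1.
case: ifP => hq; first by rewrite gadj_xm1.
by move=> h; apply: gadjG; rewrite ?hp ?hq.
Qed.

Lemma del_edgeA n s a : (size s < n)%N -> a.1 != x -> okr (a :: s) -> adjs (a :: s) ->
  forall p q, has_edge (a :: s) p q -> has_edge (G a :: del s) (phi p q).1 (phi p q).2.
Proof.
elim: n s a => [|n IH] [|b s] a // hs ha ok ad p q.
case: (boolP (b.1 == x)) => hb.
- have [c [s' [es hw hc ok']]] := step_x ok hb; subst s.
  have {}ad : adjs (c :: s') by move: ad => /= /andP[_ /andP[_ ->]].
  rewrite !del_cons hb (negPf hc) => H0; rewrite !has_edge_cons2 in H0; move: H0.
  have E : has_edge [:: G a, G c & del s'] (x - 1, b.2) (x, b.2).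
    by have [e|e] := win_G hw hb; case: e => <- <-; rewrite has_edge_cons2 eqxx ?orbT.
  have hc' := hc; have ha' := ha.
  case/or3P => [/eqP[-> ->]|/eqP[-> ->]|/or3P[/eqP[-> ->]|/eqP[-> ->]|H]];
    rewrite /phi ?hb ?(negPf ha) ?(negPf hc) //.
  apply: has_edge_consr; apply: (IH s' c) => //; move: hs => /=; lia.
- have {}ad' : adjs (b :: s) by move: ad => /= /andP[_ ->].
  rewrite del_cons (negPf hb) => H0; rewrite !has_edge_cons2 in H0; move: H0.
  rewrite has_edge_cons2.
  case/or3P => [/eqP[-> ->]|/eqP[-> ->]|H].
  + by rewrite /phi (negPf ha) (negPf hb) eqxx.
  + by rewrite /phi (negPf ha) (negPf hb) eqxx orbT.
  + by rewrite (IH s b) ?orbT //; exact: okr_tail ok.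
Qed.

Lemma del_edgeB n s a : (size s < n)%N -> a.1 != x -> okr (a :: s) -> adjs (a :: s) ->
  forall p q, has_edge (G a :: del s) p q -> has_edge (a :: s) (psi p q).1 (psi p q).2.
Proof.
elim: n s a => [|n IH] [|b s] a // hs ha ok ad p q.
case: (boolP (b.1 == x)) => hb.
- have [c [s' [es hw hc ok']]] := step_x ok hb; subst s.
  have {}ad : adjs (c :: s') by move: ad => /= /andP[_ /andP[_ ->]].
  rewrite !del_cons hb (negPf hc) => H0; rewrite !has_edge_cons2 in H0; move: H0.
  have [P1 P2] := psi_win hw hb.
  case/or3P => [/eqP[-> ->]|/eqP[-> ->]|H].
  + by rewrite P1 edge_win.
  + by rewrite P2 edge_win.
  + apply: has_edge_consr; apply: has_edge_consr.
    apply: (IH s' c) => //; move: hs => /=; lia.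
- have ab : gadj a b by move: ad => /= /andP[].
  have {}ad' : adjs (b :: s) by move: ad => /= /andP[_ ->].
  rewrite del_cons (negPf hb) => H0; rewrite !has_edge_cons2 in H0; move: H0.
  rewrite has_edge_cons2.
  case/or3P => [/eqP[-> ->]|/eqP[-> ->]|H].
  + by rewrite psi_G // eqxx.
  + by rewrite psi_G // 1?gadj_sym // eqxx orbT.
  + by rewrite (IH s b) ?orbT //; exact: okr_tail ok.
Qed.

Lemma okr_of s a : adjs (a :: s) -> uniq (a :: s) ->
  (forall p q, (p, q) \in zip (a :: s) s -> ~~ horiz p q -> p.1 != x) ->
  (s != [::] -> (last a s).1 != x) -> okr (a :: s).
Proof.
elim: s a => [|b s IH] a //= ad u hz hl.
case: s IH ad u hz hl => [|c s] IH ad u hz hl; first by apply: hl.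
apply/andP; split; last first.
  apply: IH.
  - by move: ad => /= /andP[].
  - by move: u => /= /andP[].
  - by move=> p q H; apply: hz; rewrite in_cons H orbT.
  - by move=> _; apply: hl.
apply/implyP => /eqP hb.
move: ad => /= /and3P[ab bc _].
have hab : horiz a b.
  apply/negPn/negP => H; have := hz a b; rewrite in_cons eqxx => /(_ isT H).
  have e : a.1 == b.1 by rewrite gadj_vert // H.
  by rewrite (eqP e) hb eqxx.
have hbc : horiz b c.
  apply/negPn/negP => H; have := hz b c; rewrite !in_cons eqxx orbT => /(_ isT H).
  by rewrite hb eqxx.
have ac : a != c by apply/eqP => e; move: u; rewrite e /= !inE eqxx orbT.
clear u hz hl IH; move: ab bc hab hbc ac hb; case: a => a1 a2; case: b => b1 b2; case: c => c1 c2.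
rewrite /gadj /horiz /= => /eqP ab /eqP bc /eqP e1 /eqP e2 ac hb; subst.
rewrite /win /= !eqxx /=.
move: ac; have : a1 = x - 1 \/ a1 = x + 1 by lia.
have : c1 = x - 1 \/ c1 = x + 1 by lia.
by case=> -> ; case=> -> ; rewrite ?eqxx ?andbT ?orbT //=.
Qed.
End Del.


Fixpoint bendxs (s : seq point) : seq int :=
  match s with
  | a :: ((b :: c :: _) as t) => (if horiz a b != horiz b c then [:: b.1] else [::]) ++ bendxs t
  | _ => [::]
  end.

Definition cornerxs (s : seq point) : seq int :=
  if s is a :: t then a.1 :: (last a t).1 :: bendxs s else [::].

Lemma size_bendxs s : size (bendxs s) = bends s.
Proof.
elim: s => [|a s IH] //; case: s IH => [|b [|c t]] IH //.
by rewrite [bendxs _]/= [bends _]/= size_cat IH; case: (_ != _).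
Qed.

Lemma size_cornerxs s : (size (cornerxs s) <= bends s + 2)%N.
Proof. case: s => [|a t] //; rewrite /cornerxs -(size_bendxs (a :: t)); set B := bendxs _; by rewrite /= addn2. Qed.

Lemma Zlem s a : adjs (a :: s) -> forall p q, (p, q) \in zip (a :: s) s -> ~~ horiz p q ->
  p.1 \in (if s is b :: _ then (if ~~ horiz a b then [:: a.1] else [::]) else [::])
           ++ bendxs (a :: s) ++ [:: (last a s).1].
Proof.
elim: s a => [|b s IH] a //= /andP[ab ad] p q; rewrite in_cons.
case/orP => [/eqP[-> ->] ->|H hv]; first by rewrite in_cons eqxx.
case: s IH ad H => [|c s] IH ad H //.
have := IH b ad p q H hv; rewrite !mem_cat.
case/or3P => [|->|->]; rewrite ?orbT //.
case: ifP => // hbc; rewrite in_cons orbF => /eqP ->.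
case: (boolP (horiz a b)) => hab.
- by rewrite (negPf hbc) /= in_cons eqxx.
- have e : a.1 == b.1 by rewrite gadj_vert // hab.
  by rewrite in_cons (eqP e) eqxx.
Qed.

Lemma vert_corner s a : adjs (a :: s) -> forall p q, (p, q) \in zip (a :: s) s -> ~~ horiz p q ->
  p.1 \in cornerxs (a :: s).
Proof.
move=> ad p q H hv; have := Zlem ad H hv; rewrite /cornerxs !mem_cat !in_cons.
case/or3P => [|->|/orP[->|//]]; rewrite ?orbT //.
by case: s {ad H} => [|b t] //; case: ifP => // _; rewrite in_cons orbF => ->.
Qed.


Lemma path_good x s : is_gpath s -> x \notin cornerxs s ->
  exists a t, [/\ s = a :: t, a.1 != x, okr x (a :: t), adjs (a :: t) & t != [::]].
Proof.
case/and3P; case: s => [|a t] //= st u; rewrite adjsE => ad hx.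
have nx : forall y, y \in cornerxs (a :: t) -> y != x.
  by move=> y hy; apply/eqP => e; move: hx; rewrite -e hy.
exists a, t; split => //.
- by apply: nx; rewrite /cornerxs in_cons eqxx.
- apply: okr_of => //.
  + by move=> p q H hv; apply: nx; apply: (vert_corner ad H hv).
  + by move=> _; apply: nx; rewrite /cornerxs !in_cons eqxx orbT.
- by case: t st {ad u hx nx}.
Qed.

Lemma del_good x s : is_gpath s -> x \notin cornerxs s ->
  [/\ is_gpath (del x s), bends (del x s) = bends s,
      forall p q, has_edge s p q -> has_edge (del x s) (phi x p q).1 (phi x p q).2 &
      forall p q, has_edge (del x s) p q -> has_edge s (psi x p q).1 (psi x p q).2].
Proof.
move=> gp hx; have [a [t [es ha ok ad nt]]] := path_good gp hx.
have dE : del x s = G x a :: del x t by rewrite es del_cons (negPf ha).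
have hn : (size t < (size t).+1)%N by [].
rewrite dE; split.
- rewrite /is_gpath adjsE (del_adjs hn) // -dE del_uniq; last by case/and3P: gp.
  rewrite dE /= andbT; have := del_nonnil nt ok; by case: (del x t).
- by rewrite es (del_bends hn).
- by rewrite es; apply: (del_edgeA hn).
- by rewrite es; apply: (del_edgeB hn).
Qed.

Section Fam.
Variables (V : finType) (E : rel V) (k : nat).

Lemma del_family x P : BkEPG E k P -> (forall v, x \notin cornerxs (P v)) ->
  BkEPG E k (fun v => del x (P v)) /\ (helly P -> helly (fun v => del x (P v))).
Proof.
case=> hp he hx.
have D v := del_good (proj1 (hp v)) (hx v).
have shareE u v : share_edge (del x (P u)) (del x (P v)) <-> share_edge (P u) (P v).
  have [_ _ A1 B1] := D u; have [_ _ A2 B2] := D v; split.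
  - case=> p [q [g [h1 h2]]]; exists (psi x p q).1, (psi x p q).2; split.
    + apply: (@has_edge_gadj (P u)); last exact: B1.
      by rewrite -adjsE; case/and3P: (proj1 (hp u)).
    + by split; [apply: B1|apply: B2].
  - case=> p [q [g [h1 h2]]]; exists (phi x p q).1, (phi x p q).2; split.
    + exact: gadj_phi.
    + by split; [apply: A1|apply: A2].
split.
- split.
  + move=> v; have [g b _ _] := D v; split => //; rewrite b; exact: (proj2 (hp v)).
  + by move=> u v uv; rewrite shareE; apply: he.
- move=> hh S HS.
  have [p [q [g H]]] := hh S (fun u v hu hv => proj1 (shareE u v) (HS u v hu hv)).
  exists (phi x p q).1, (phi x p q).2; split; first exact: gadj_phi.
  by move=> u hu; have [_ _ A _] := D u; apply: A; apply: H.
Qed.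
End Fam.


Section Bij.
Variables (F F' : point -> point).
Hypotheses (FK : cancel F F') (F'K : cancel F' F)
  (Fg : forall p q, gadj (F p) (F q) = gadj p q)
  (Fh : forall a b c, gadj a b -> gadj b c ->
     (horiz (F a) (F b) != horiz (F b) (F c)) = (horiz a b != horiz b c)).

Lemma adjs_cons2 a b t : adjs [:: a, b & t] = gadj a b && adjs (b :: t).
Proof. by []. Qed.

Lemma adjs_map s : adjs (map F s) = adjs s.
Proof.
elim: s => [|a s IH] //; case: s IH => [|b t] IH //.
by rewrite map_cons map_cons !adjs_cons2 -map_cons IH Fg.
Qed.

Lemma bends_map s : adjs s -> bends (map F s) = bends s.
Proof.
elim: s => [|a s IH] //; case: s IH => [|b [|c t]] IH //.
move=> ad; have ad' : adjs [:: b, c & t] by move: ad; rewrite adjs_cons2 => /andP[].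
move: ad; rewrite !adjs_cons2 => /and3P[ab bc _].
rewrite !map_cons bends_cons -!map_cons IH // [RHS]bends_cons Fh //.
Qed.

Lemma has_edge_map s p q : has_edge (map F s) (F p) (F q) = has_edge s p q.
Proof.
elim: s => [|a s IH] //; case: s IH => [|b t] IH //.
rewrite map_cons map_cons has_edge_cons2 -map_cons IH has_edge_cons2.
have Fi := can_inj FK.
by rewrite !xpair_eqE !(inj_eq Fi).
Qed.

Lemma has_edge_map' s p q : has_edge (map F s) p q = has_edge s (F' p) (F' q).
Proof. by rewrite -{1}(F'K p) -{1}(F'K q) has_edge_map. Qed.

Variables (V : finType) (E : rel V) (k : nat).

Lemma bij_family P : BkEPG E k P ->
  BkEPG E k (fun v => map F (P v)) /\ (helly P -> helly (fun v => map F (P v))).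
Proof.
case=> hp he.
have shareE u v : share_edge (map F (P u)) (map F (P v)) <-> share_edge (P u) (P v).
  split.
  - case=> p [q [g [h1 h2]]]; exists (F' p), (F' q).
    by rewrite -Fg !F'K -!has_edge_map' .
  - case=> p [q [g [h1 h2]]]; exists (F p), (F q).
    by rewrite Fg !has_edge_map.
split.
- split.
  + move=> v; have [/and3P[s1 u ad] b] := hp v; split.
    * by rewrite /is_gpath size_map s1 (map_inj_uniq (can_inj FK)) u adjsE adjs_map -adjsE.
    * by rewrite bends_map // -adjsE.
  + by move=> u v uv; rewrite shareE; apply: he.
- move=> hh S HS.
  have [p [q [g H]]] := hh S (fun u v hu hv => proj1 (shareE u v) (HS u v hu hv)).
  exists (F p), (F q); split; first by rewrite Fg.
  by move=> u hu; rewrite has_edge_map; apply: H.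
Qed.
End Bij.


Definition swp (p : point) : point := (p.2, p.1).
Lemma swpK : cancel swp swp. Proof. by case. Qed.
Lemma swp_gadj p q : gadj (swp p) (swp q) = gadj p q.
Proof. by rewrite /gadj /= addnC. Qed.
Lemma swp_horiz a b c : gadj a b -> gadj b c ->
  (horiz (swp a) (swp b) != horiz (swp b) (swp c)) = (horiz a b != horiz b c).
Proof.
move=> ab bc; rewrite /horiz /= (gadj_vert ab) (gadj_vert bc).
by case: (a.2 == b.2); case: (b.2 == c.2).
Qed.

Definition trn (c : int) (p : point) : point := (p.1 + c, p.2 + c).
Lemma trnK c : cancel (trn c) (trn (- c)).
Proof. by case=> a b; rewrite /trn /= !addrK. Qed.
Lemma trnK' c : cancel (trn (- c)) (trn c).
Proof. by case=> a b; rewrite /trn /= !subrK. Qed.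
Lemma trn_gadj c p q : gadj (trn c p) (trn c q) = gadj p q.
Proof. rewrite /gadj /=; apply/eqP/eqP; lia. Qed.
Lemma trn_horiz c a b d : gadj a b -> gadj b d ->
  (horiz (trn c a) (trn c b) != horiz (trn c b) (trn c d)) = (horiz a b != horiz b d).
Proof. by move=> _ _; rewrite /horiz /= !(inj_eq (addIr c)). Qed.

Lemma on_grid_swp a b s : on_grid a b (map swp s) = on_grid b a s.
Proof.
rewrite /on_grid all_map; apply: eq_all => p /=.
by case: (0 <= p.1); case: (0 <= p.2); case: (p.1 < _); case: (p.2 < _).
Qed.

Lemma sumn_le (l : seq nat) m : all (fun y => y <= m)%N l -> (sumn l <= size l * m)%N.
Proof. elim: l => [|y l IH] //= /andP[h1 h2]; rewrite mulSn; apply: leq_add => //; exact: IH. Qed.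

Lemma mem_sumn (l : seq nat) y : y \in l -> (y <= sumn l)%N.
Proof.
elim: l => [|z l IH] //=; rewrite in_cons => /orP[/eqP ->|/IH h]; first exact: leq_addr.
by apply: leq_trans h _; apply: leq_addl.
Qed.

Section Comp.
Variables (V : finType) (E : rel V) (k : nat).

Lemma count_crit W (P : V -> seq point) : BkEPG E k P ->
  (forall i : nat, (i < W)%N -> (i%:Z) \in flatten [seq cornerxs (P v) | v <- enum V]) ->
  (W <= #|V| * (k + 2))%N.
Proof.
move=> [hp _] H.
set C := flatten _ in H.
have : (size [seq i%:Z | i <- iota 0 W] <= size C)%N.
  apply: uniq_leq_size.
  - by rewrite map_inj_uniq ?iota_uniq // => a b [].
  - by move=> z /mapP[i]; rewrite mem_iota add0n => /andP[_ hi] ->; apply: H.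
rewrite size_map size_iota => h; apply: leq_trans h _.
rewrite /C size_flatten /shape -map_comp cardE.
rewrite -(size_map (size \o fun v => cornerxs (P v))).
apply: sumn_le; apply/allP => y /mapP[v _ ->] /=.
apply: leq_trans (size_cornerxs _) _; rewrite leq_add2r; exact: (proj2 (hp v)).
Qed.

Lemma compress W B (P : V -> seq point) : BkEPG E k P -> (forall v, on_grid W B (P v)) ->
  exists P', BkEPG E k P' /\ (helly P -> helly P') /\
    exists W', (W' <= #|V| * (k + 2))%N /\ forall v, on_grid W' B (P' v).
Proof.
elim: W P => [|W IH] P hP hg.
- exists P; split => //; split => //; exists 0%N; split => //.

set C := flatten [seq cornerxs (P v) | v <- enum V].
case: (boolP (has (fun i : nat => (i%:Z) \notin C) (iota 0 W.+1))) => hh; last first.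
  exists P; split => //; split => //; exists W.+1; split => //.
  apply: count_crit hP _ => i hi; move/hasPn: hh => /(_ i); rewrite mem_iota add0n hi.
  by move/(_ isT); rewrite negbK.
case/hasP: hh => i; rewrite mem_iota add0n => /andP[_ hi] hiC.
have hx v : (i%:Z) \notin cornerxs (P v).
  apply: contra hiC => h; apply/flatten_mapP; exists v => //; exact: mem_enum.
have [hP1 hH1] := del_family hP hx.
have hg1 v : on_grid W B (del i%:Z (P v)).
  rewrite /on_grid delE all_map all_filter; apply/allP => -[p1 p2] hp; apply/implyP => /= hpx.
  move/allP: (hg v) => /(_ _ hp) /and4P[/= h1 h2 h3 h4].
  rewrite /G /=; case: ifP => /= hc; rewrite h3 h4 /= ?andbT; apply/andP; split; lia.
have [P' [hP' [hH' hW]]] := IH _ hP1 hg1.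
by exists P'; split => //; split => // hh; apply: hH'; apply: hH1.
Qed.
End Comp.

Section Red.
Variables (V : finType) (E : rel V) (k : nat).

Lemma reduce (P : V -> seq point) : BkEPG E k P ->
  exists P', BkEPG E k P' /\ (helly P -> helly P') /\
    exists a b, [/\ (a <= #|V| * (k + 2))%N, (b <= #|V| * (k + 2))%N &
                 forall v, on_grid a b (P' v)].
Proof.
move=> hP.
set c := sumn [seq (`|p.1| + `|p.2|)%N | p <- flatten [seq P v | v <- enum V]].
have hc v p : p \in P v -> (`|p.1| + `|p.2| <= c)%N.
  move=> hp; apply: mem_sumn; apply: (map_f (fun p : point => (`|p.1| + `|p.2|)%N)).
  by apply/flatten_mapP; exists v => //; exact: mem_enum.
have [hP0 hH0] := bij_family (trnK c%:Z) (trnK' c%:Z) (@trn_gadj _) (@trn_horiz _) hP.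
have hg0 v : on_grid (c + c).+1 (c + c).+1 (map (trn c%:Z) (P v)).
  rewrite /on_grid all_map; apply/allP => -[p1 p2] hp /=.
  have := hc v _ hp => /= h.
  apply/and4P; split; lia.
have [P1 [hP1 [hH1 [W1 [hW1 hg1]]]]] := compress hP0 hg0.
have [hP2 hH2] := bij_family swpK swpK swp_gadj swp_horiz hP1.
have hg2 v : on_grid (c + c).+1 W1 (map swp (P1 v)) by rewrite on_grid_swp.
have [P3 [hP3 [hH3 [W2 [hW2 hg3]]]]] := compress hP2 hg2.
have [hP4 hH4] := bij_family swpK swpK swp_gadj swp_horiz hP3.
exists (fun v => map swp (P3 v)); split => //; split.
  by move=> h; apply: hH4; apply: hH3; apply: hH2; apply: hH1; apply: hH0.
by exists W1, W2; split => // v; rewrite on_grid_swp.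
Qed.
End Red.

Unset Implicit Arguments.
Close Scope ring_scope.

Theorem lemma3p4 (V : finType) (E : rel V) (n k : nat) :
  symmetric E -> irreflexive E -> #|V| = n ->
  ((exists P, BkEPG E k P) ->
     exists P, BkEPG E k P /\
       exists a b, (a <= 4 * n * (k + 1))%N /\ (b <= 4 * n * (k + 1))%N /\
                   forall v, on_grid a b (P v)) /\
  ((exists P, BkEPG E k P /\ helly P) ->
     exists P, BkEPG E k P /\ helly P /\
       exists a b, (a <= 4 * n * (k + 1))%N /\ (b <= 4 * n * (k + 1))%N /\
                   forall v, on_grid a b (P v)).
Proof.
move=> _ _ hn.
have le : (#|V| * (k + 2) <= 4 * n * (k + 1))%N by rewrite hn; nia.
split.
- case=> P hP; have [P' [hP' [_ [a [b [ha hb hg]]]]]] := reduce hP.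
  exists P'; split => //; exists a, b; split; last split => //.
  + exact: leq_trans ha le.
  + exact: leq_trans hb le.
- case=> P [hP hH]; have [P' [hP' [hH' [a [b [ha hb hg]]]]]] := reduce hP.
  exists P'; split => //; split; first exact: hH'.
  exists a, b; split; last split => //.
  + exact: leq_trans ha le.
  + exact: leq_trans hb le.
Qed.
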